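(* Let $x$ be an irrational real number and $f_x(t):=f(x+i/t)$ for $t>0$. If $t_0>0$ is a point where $f_x$ has a local minimum, then there exist $g\in\mathrm{PSL}_2(\mathbb{Z})$ with $x+i/t_0\in g\cdot(D_0+n)$ for some $n\in\mathbb{Z}$, and, writing $g\cdot\infty=p/q$ in lowest terms with $q>0$, one has $t_0=\left|q/(qx-p)\right|$ and $f_x(t_0)=2\,|q(qx-p)|$.
   Context: $\mathbb{H}=\{\omega\in\mathbb{C}:\mathrm{Im}(\omega)>0\}$. For $\omega\in\mathbb{H}$, $d(\omega)=\min\{|\alpha+\beta\omega| : \alpha,\beta\in\mathbb{Z},\ (\alpha,\beta)\neq(0,0)\}$ and $f(\omega)=d(\omega)^2/\mathrm{Im}(\omega)$. $\mathrm{PSL}_2(\mathbb{Z})$ acts by $\begin{pmatrix}a&b\\c&d\end{pmatrix}\cdot\omega=\frac{a\omega+b}{c\omega+d}$, with $g\cdot\infty=a/c$ if $c\neq0$ and $\infty$ otherwise. $D_0=\{\omega: -1/2\le\mathrm{Re}(\omega)\le1/2,\ |\omega|\ge1\}$; the sets $g\cdot(D_0+n)$, $g\in\mathrm{PSL}_2(\mathbb{Z})$, $n\in\mathbb{Z}$, cover $\mathbb{H}$, and on such a set with cusp $g\cdot\infty=p/q$ one has $f(x+i/t)=(qx-p)^2t+q^2/t$. *)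

(* Defs.v *)
From Stdlib Require Import Reals ZArith Znumtheory.
From Coquelicot Require Import Coquelicot.
Open Scope R_scope.

Definition dvals (w : C) (r : R) : Prop :=
  exists alpha beta : Z, (alpha, beta) <> (0%Z, 0%Z) /\
    r = Cmod (Cplus (RtoC (IZR alpha)) (Cmult (RtoC (IZR beta)) w)).

(* d(w) = min of the above set (for w in H the minimum is attained, so it
   equals the infimum). *)
Definition dH (w : C) : R := real (Glb_Rbar (dvals w)).

Definition fH (w : C) : R := (dH w) ^ 2 / Im w.

Definition fx (x t : R) : R := fH (Cplus (RtoC x) (Cmult Ci (RtoC (/ t)))).

Definition mobius (a b c d : Z) (w : C) : C :=
  Cdiv (Cplus (Cmult (RtoC (IZR a)) w) (RtoC (IZR b)))
       (Cplus (Cmult (RtoC (IZR c)) w) (RtoC (IZR d))).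

(* An element of PSL_2(Z) is represented by any integer matrix of determinant 1
   (both lifts give the same action). *)
Definition is_SL2Z (a b c d : Z) : Prop := (a * d - b * c)%Z = 1%Z.

Definition D0 (w : C) : Prop :=
  0 < Im w /\ -1/2 <= Re w <= 1/2 /\ 1 <= Cmod w.

Definition in_gD0n (a b c d n : Z) (w : C) : Prop :=
  exists z : C, D0 z /\ w = mobius a b c d (Cplus z (RtoC (IZR n))).

Definition irrational (x : R) : Prop :=
  ~ exists p q : Z, q <> 0%Z /\ x = IZR p / IZR q.

Definition local_min_pos (h : R -> R) (t0 : R) : Prop :=
  exists eps : R, Rlt 0 eps /\
    (forall t : R, Rlt 0 t -> Rlt (Rabs (t - t0)) eps -> Rle (h t0) (h t)).

(* Main.v *)
Require Import Defs.
From Stdlib Require Import Reals ZArith Znumtheory Lra Lia Psatz List.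
From Coquelicot Require Import Coquelicot.
Open Scope R_scope.

Definition Nf (x y : R) (a b : Z) : R := (IZR a + IZR b * x)^2 + (IZR b * y)^2.

Lemma Nf_ge0 x y a b : 0 <= Nf x y a b.
Proof. unfold Nf; apply Rplus_le_le_0_compat; apply pow2_ge_0. Qed.

Lemma cmod_eq x y a b :
  Cmod (Cplus (RtoC (IZR a)) (Cmult (RtoC (IZR b)) (Cplus (RtoC x) (Cmult Ci (RtoC y)))))
  = sqrt (Nf x y a b).
Proof. unfold Cmod, Nf; simpl; f_equal; ring. Qed.

Lemma list_min {A} (f : A -> R) (l : list A) (a0 : A) :
  In a0 l -> exists a, In a l /\ forall b, In b l -> f a <= f b.
Proof.
  revert a0; induction l as [|h t IH]; simpl; [tauto|]. intros a0.
  intros _. destruct t as [|h2 t'].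
  - exists h; split; auto. intros b [<-|[]]; lra.
  - destruct (IH h2 (or_introl eq_refl)) as [m [Hm Hmin]].
    destruct (Rle_lt_dec (f h) (f m)).
    + exists h; split; auto. intros b [<-|Hb]; [lra|]. specialize (Hmin b Hb); lra.
    + exists m; split; auto. intros b [<-|Hb]; [lra|]. auto.
Qed.

Definition rngZ (K : Z) : list Z :=
  map (fun i => (Z.of_nat i - K)%Z) (seq 0 (Z.to_nat (2*K+1))).

Lemma rngZ_in K a : (0 <= K)%Z -> (- K <= a <= K)%Z -> In a (rngZ K).
Proof.
  intros HK Ha. unfold rngZ. apply in_map_iff.
  exists (Z.to_nat (a + K)). split; [lia|]. apply in_seq. lia.
Qed.

Lemma exists_min x y : 0 < y -> exists a b, (a, b) <> (0%Z, 0%Z) /\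
  forall a' b', (a', b') <> (0%Z, 0%Z) -> Nf x y a b <= Nf x y a' b'.
Proof.
  intros Hy.
  set (K1 := up (/ y)). set (K2 := up (IZR K1 * Rabs x + 1)).
  destruct (archimed (/ y)) as [H1 _]. fold K1 in H1.
  destruct (archimed (IZR K1 * Rabs x + 1)) as [H2 _]. fold K2 in H2.
  assert (HK1 : (0 <= K1)%Z). { apply le_IZR. assert (0 < / y) by (apply Rinv_0_lt_compat; lra). lra. }
  assert (HK2 : (1 <= K2)%Z). { apply le_IZR. assert (0 <= IZR K1) by (apply IZR_le; lia).
    assert (0 <= IZR K1 * Rabs x) by (apply Rmult_le_pos; [lra|apply Rabs_pos]). lra. }
  set (L := filter (fun pr : Z * Z => negb (Z.eqb (fst pr) 0 && Z.eqb (snd pr) 0))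
              (list_prod (rngZ K2) (rngZ K1))).
  assert (Hin : In (1%Z, 0%Z) L).
  { unfold L; apply filter_In; split; [apply in_prod; apply rngZ_in; lia | reflexivity]. }
  destruct (list_min (fun pr => Nf x y (fst pr) (snd pr)) L _ Hin) as [[a b] [Hab Hmin]].
  unfold L in Hab. apply filter_In in Hab. destruct Hab as [_ Hnz].
  exists a, b. split.
  { intro E; injection E; intros; subst; simpl in Hnz; discriminate. }
  assert (Hle1 : Nf x y a b <= 1).
  { specialize (Hmin _ Hin). simpl in Hmin. unfold Nf in Hmin at 2.
    replace ((IZR 1 + IZR 0 * x) ^ 2 + (IZR 0 * y) ^ 2) with 1 in Hmin by (simpl; ring). exact Hmin. }
  intros a' b' Hnz'.
  destruct (Z_le_gt_dec (Z.abs b') K1) as [Hb'|Hb'].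
  - destruct (Z_le_gt_dec (Z.abs a') K2) as [Ha'|Ha'].
    + apply (Hmin (a', b')). unfold L; apply filter_In; split.
      * apply in_prod; apply rngZ_in; lia.
      * simpl. destruct (Z.eqb_spec a' 0); destruct (Z.eqb_spec b' 0); subst; simpl; auto.
    + eapply Rle_trans; [exact Hle1|]. unfold Nf.
      assert (Ha2 : IZR K2 + 1 <= Rabs (IZR a')).
      { rewrite Rabs_Zabs. rewrite <- plus_IZR. apply IZR_le. lia. }
      assert (Hb2 : Rabs (IZR b') <= IZR K1).
      { rewrite Rabs_Zabs. apply IZR_le. lia. }
      assert (Hbx : Rabs (IZR b' * x) <= IZR K1 * Rabs x).
      { rewrite Rabs_mult. apply Rmult_le_compat_r; [apply Rabs_pos|exact Hb2]. }
      assert (Htri : Rabs (IZR a') - Rabs (IZR b' * x) <= Rabs (IZR a' + IZR b' * x)).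
      { pose proof (Rabs_triang (IZR a' + IZR b' * x) (- (IZR b' * x))).
        rewrite Rabs_Ropp in H. replace (IZR a' + IZR b' * x + - (IZR b' * x)) with (IZR a') in H by ring. lra. }
      assert (1 <= Rabs (IZR a' + IZR b' * x)) by lra.
      assert (1 <= (IZR a' + IZR b' * x)^2).
      { rewrite <- (pow2_abs (IZR a' + IZR b' * x)). nra. }
      nra.
  - eapply Rle_trans; [exact Hle1|]. unfold Nf.
    assert (Hb2 : IZR K1 + 1 <= Rabs (IZR b')).
    { rewrite Rabs_Zabs. rewrite <- plus_IZR. apply IZR_le. lia. }
    assert (1 < Rabs (IZR b') * y).
    { assert (/ y * y = 1) by (field; lra). nra. }
    assert (1 <= (IZR b' * y)^2).
    { rewrite <- (pow2_abs (IZR b' * y)). rewrite Rabs_mult, (Rabs_right y) by lra. nra. }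
    pose proof (pow2_ge_0 (IZR a' + IZR b' * x)); lra.
Qed.

Lemma fx_eq x t a b : 0 < t -> (a, b) <> (0%Z, 0%Z) ->
  (forall a' b', (a', b') <> (0%Z, 0%Z) -> Nf x (/t) a b <= Nf x (/t) a' b') ->
  fx x t = t * Nf x (/ t) a b.
Proof.
  intros Ht Hnz Hmin.
  unfold fx, fH, dH.
  rewrite (is_glb_Rbar_unique _ (Finite (sqrt (Nf x (/t) a b)))).
  - simpl. rewrite Rmult_1_r, sqrt_sqrt by apply Nf_ge0. field. lra.
  - split.
    + intros r [al [be [Hn ->]]]. rewrite cmod_eq. simpl. apply sqrt_le_1_alt. auto.
    + intros l Hl. apply Hl. exists a, b. split; auto. rewrite cmod_eq. reflexivity.
Qed.

Lemma fx_char x t : 0 < t -> exists a b, (a, b) <> (0%Z, 0%Z) /\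
  (forall a' b', (a', b') <> (0%Z, 0%Z) -> Nf x (/t) a b <= Nf x (/t) a' b') /\
  fx x t = t * Nf x (/ t) a b /\
  (forall a' b', (a', b') <> (0%Z, 0%Z) -> fx x t <= t * Nf x (/t) a' b').
Proof.
  intros Ht.
  assert (Hy : 0 < / t) by (apply Rinv_0_lt_compat; lra).
  destruct (exists_min x (/ t) Hy) as [a [b [Hnz Hmin]]].
  exists a, b. split; [auto|]. split; [auto|].
  rewrite (fx_eq x t a b Ht Hnz Hmin). split; [auto|].
  intros a' b' H'. apply Rmult_le_compat_l; [lra|]. auto.
Qed.

Lemma crit A B t0 eps : 0 < A -> 0 <= B -> 0 < t0 -> 0 < eps ->
  (forall t, 0 < t -> Rabs (t - t0) < eps -> t0 * A + B / t0 <= t * A + B / t) ->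
  A * t0^2 = B.
Proof.
  intros HA HB Ht0 He H.
  destruct (Rtotal_order (A * t0^2) B) as [Hlt|[Heq|Hgt]]; [|exact Heq|].
  - set (d := Rmin (eps/2) ((B - A * t0^2) / (2 * A * t0))).
    assert (Hd1 : d <= eps/2) by apply Rmin_l.
    assert (Hd2 : d <= (B - A * t0^2) / (2 * A * t0)) by apply Rmin_r.
    assert (Hdp : 0 < d).
    { apply Rmin_glb_lt; [lra|]. apply Rdiv_lt_0_compat; [lra|]. nra. }
    assert (Hd3 : d * (2 * A * t0) <= B - A * t0^2).
    { apply Rmult_le_compat_r with (r := 2 * A * t0) in Hd2; [|nra].
      replace ((B - A * t0 ^ 2) / (2 * A * t0) * (2 * A * t0)) with (B - A * t0^2) in Hd2 by (field; lra). lra. }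
    specialize (H (t0 + d)). 
    assert (Hx : t0 * A + B / t0 <= (t0 + d) * A + B / (t0 + d)).
    { apply H; [lra|]. replace (t0 + d - t0) with d by ring. rewrite Rabs_right; lra. }
    assert (Hid : (t0 + d) * A + B / (t0 + d) - (t0 * A + B / t0) = d * (A * (t0 + d) * t0 - B) / ((t0+d) * t0)).
    { field. lra. }
    assert (d * (A * (t0 + d) * t0 - B) / ((t0+d) * t0) < 0).
    { apply Rdiv_neg_pos; [|nra]. assert (A * (t0 + d) * t0 - B < 0) by nra. nra. }
    lra.
  - set (d := Rmin (Rmin (eps/2) (t0/2)) ((A * t0^2 - B) / (2 * A * t0))).
    assert (Hd1 : d <= eps/2). { unfold d. pose proof (Rmin_l (Rmin (eps/2) (t0/2)) ((A * t0^2 - B) / (2 * A * t0))). pose proof (Rmin_l (eps/2) (t0/2)). lra. }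
    assert (Hd1' : d <= t0/2). { unfold d. pose proof (Rmin_l (Rmin (eps/2) (t0/2)) ((A * t0^2 - B) / (2 * A * t0))). pose proof (Rmin_r (eps/2) (t0/2)). lra. }
    assert (Hd2 : d <= (A * t0^2 - B) / (2 * A * t0)) by apply Rmin_r.
    assert (Hdp : 0 < d).
    { apply Rmin_glb_lt; [apply Rmin_glb_lt; lra|]. apply Rdiv_lt_0_compat; [lra|]. nra. }
    assert (Hd3 : d * (2 * A * t0) <= A * t0^2 - B).
    { apply Rmult_le_compat_r with (r := 2 * A * t0) in Hd2; [|nra].
      replace ((A * t0 ^ 2 - B) / (2 * A * t0) * (2 * A * t0)) with (A * t0^2 - B) in Hd2 by (field; lra). lra. }
    assert (Hx : t0 * A + B / t0 <= (t0 - d) * A + B / (t0 - d)).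
    { apply H; [lra|]. replace (t0 - d - t0) with (- d) by ring. rewrite Rabs_Ropp, Rabs_right; lra. }
    assert (Hid : (t0 - d) * A + B / (t0 - d) - (t0 * A + B / t0) = (- d) * (A * (t0 - d) * t0 - B) / ((t0-d) * t0)).
    { field. lra. }
    assert ((- d) * (A * (t0 - d) * t0 - B) / ((t0-d) * t0) < 0).
    { apply Rdiv_neg_pos; [|nra]. assert (A * (t0 - d) * t0 - B > 0) by nra. nra. }
    lra.
Qed.

Lemma gcd_one x y p q : 0 < y -> (0 < q)%Z ->
  (forall a' b', (a', b') <> (0%Z, 0%Z) -> Nf x y (-p) q <= Nf x y a' b') ->
  Z.gcd p q = 1%Z.
Proof.
  intros Hy Hq Hmin.
  set (g := Z.gcd p q).
  assert (Hg0 : (0 <= g)%Z) by apply Z.gcd_nonneg.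
  assert (Hgn : g <> 0%Z). { intro E. apply Z.gcd_eq_0_r in E. lia. }
  destruct (Z.eq_dec g 1) as [E|Hne]; [exact E|exfalso].
  destruct (Z.gcd_divide_l p q) as [k Hk]. destruct (Z.gcd_divide_r p q) as [m Hm].
  fold g in Hk, Hm.
  assert (Hm0 : m <> 0%Z) by (intro E; rewrite E in Hm; lia).
  assert (Hnz : (- k, m)%Z <> (0%Z, 0%Z)) by (intro E; injection E; intros; lia).
  specialize (Hmin _ _ Hnz).
  assert (Hid : Nf x y (-p) q = IZR g ^ 2 * Nf x y (-k) m).
  { rewrite Hk, Hm. unfold Nf. rewrite !opp_IZR, !mult_IZR. ring. }
  assert (Hpos : 0 < Nf x y (-k) m).
  { unfold Nf. assert (IZR m <> 0) by (apply not_0_IZR; auto).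
    assert (0 < (IZR m * y)^2). { apply pow2_gt_0. apply Rmult_integral_contrapositive; split; lra. }
    pose proof (pow2_ge_0 (IZR (-k) + IZR m * x)). lra. }
  assert (Hg2 : 2 <= IZR g) by (apply IZR_le; lia).
  assert (4 <= IZR g ^ 2) by nra.
  nra.
Qed.

Lemma geo x y p b q d : 0 < y -> (0 < q)%Z -> (p * d - b * q = 1)%Z ->
  (forall a' b', (a', b') <> (0%Z, 0%Z) -> Nf x y (-p) q <= Nf x y a' b') ->
  exists n, in_gD0n p b q d n (x, y).
Proof.
  intros Hy Hq Hdet Hmin.
  set (P := IZR p). set (Bb := IZR b). set (Q := IZR q). set (Dd := IZR d).
  assert (HQ : 0 < Q) by (apply IZR_lt; lia).
  assert (HdetR : P * Dd - Bb * Q = 1).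
  { unfold P, Dd, Bb, Q. rewrite <- !mult_IZR, <- minus_IZR, Hdet. reflexivity. }
  set (Dn := (Q * x - P)^2 + (Q * y)^2).
  assert (HDn : 0 < Dn).
  { unfold Dn. assert (0 < (Q*y)^2) by (apply pow2_gt_0; nra). pose proof (pow2_ge_0 (Q*x-P)). lra. }
  assert (HDnN : Dn = Nf x y (-p) q).
  { unfold Nf, Dn, P, Q. rewrite opp_IZR. ring. }
  set (X0 := ((Dd * x - Bb) * (P - Q * x) - Dd * Q * y^2) / Dn).
  set (Y0 := y * (Dd * P - Bb * Q) / Dn).
  set (n := (up (X0 + /2) - 1)%Z).
  exists n. exists (X0 - IZR n, Y0).
  split.
  - unfold D0. simpl. split; [|split].
    + unfold Y0. replace (Dd * P - Bb * Q) with 1 by lra. apply Rdiv_lt_0_compat; lra.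
    + destruct (archimed (X0 + /2)) as [H1 H2].
      unfold n. rewrite minus_IZR. simpl (IZR 1). lra.
    + unfold Cmod. simpl. apply Rle_trans with (sqrt 1); [rewrite sqrt_1; lra|]. apply sqrt_le_1_alt.
      set (N := IZR n).
      assert (Hnz : ((- (b + n * p))%Z, (d + n * q)%Z) <> (0%Z, 0%Z)).
      { intro E; injection E; intros E1 E2. nia. }
      specialize (Hmin _ _ Hnz).
      assert (Hid : ((X0 - N) * ((X0 - N) * 1) + Y0 * (Y0 * 1)) * Dn
                    = Nf x y (- (b + n * p)) (d + n * q)).
      { unfold Nf. rewrite opp_IZR, !plus_IZR, !mult_IZR. fold N P Q Bb Dd.
        unfold X0, Y0, Dn. field. fold Dn. lra. }
      rewrite <- HDnN, <- Hid in Hmin.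
      apply Rmult_le_reg_r with Dn; [exact HDn|]. lra.
  - assert (Hz : Cplus (X0 - IZR n, Y0) (RtoC (IZR n)) = (X0, Y0)).
    { unfold Cplus, RtoC; simpl; f_equal; ring. }
    set (w := (x, y) : C).
    assert (Hden : Cminus (RtoC P) (Cmult (RtoC Q) w) <> RtoC 0).
    { intro E; apply (f_equal snd) in E; simpl in E.
      assert (0 < Q * y) by nra. lra. }
    assert (Hz' : (X0, Y0) = Cdiv (Cminus (Cmult (RtoC Dd) w) (RtoC Bb)) (Cminus (RtoC P) (Cmult (RtoC Q) w))).
    { unfold Cdiv, Cminus, Cinv, Cmult, Copp, Cplus, RtoC, w; simpl. unfold X0, Y0, Dn.
      assert (Hd2 : (P + - (Q * x)) * (P + - (Q * x)) + - (Q * y) * - (Q * y) = Dn) by (unfold Dn; ring).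
      f_equal; field; rewrite Hd2; lra. }
    assert (HE : Cminus (Cmult (RtoC P) (RtoC Dd)) (Cmult (RtoC Bb) (RtoC Q)) = RtoC 1).
    { unfold Cminus, Cmult, Copp, Cplus, RtoC; simpl; f_equal; [lra|ring]. }
    assert (H1 : RtoC 1 <> RtoC 0).
    { intro E; injection E; apply R1_neq_R0. }
    unfold mobius. fold P Bb Q Dd. rewrite Hz, Hz'.
    assert (Hm : Cdiv (Cplus (Cmult (RtoC P) (Cdiv (Cminus (Cmult (RtoC Dd) w) (RtoC Bb)) (Cminus (RtoC P) (Cmult (RtoC Q) w)))) (RtoC Bb))
       (Cplus (Cmult (RtoC Q) (Cdiv (Cminus (Cmult (RtoC Dd) w) (RtoC Bb)) (Cminus (RtoC P) (Cmult (RtoC Q) w)))) (RtoC Dd))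
       = Cdiv (Cmult w (Cminus (Cmult (RtoC P) (RtoC Dd)) (Cmult (RtoC Bb) (RtoC Q)))) (Cminus (Cmult (RtoC P) (RtoC Dd)) (Cmult (RtoC Bb) (RtoC Q)))).
    { field. rewrite HE. auto. }
    rewrite Hm, HE. field; try exact H1.
Qed.

Lemma final x t0 p q : 0 < t0 -> (0 < q)%Z ->
  (forall a' b', (a', b') <> (0%Z, 0%Z) -> Nf x (/t0) (-p) q <= Nf x (/t0) a' b') ->
  fx x t0 = t0 * Nf x (/t0) (-p) q ->
  (IZR (-p) + IZR q * x)^2 * t0^2 = IZR q ^ 2 ->
  exists (a b c d n : Z),
    is_SL2Z a b c d /\
    in_gD0n a b c d n (Cplus (RtoC x) (Cmult Ci (RtoC (/ t0)))) /\
    c <> 0%Z /\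
    exists p q : Z,
      (0 < q)%Z /\ Z.gcd p q = 1%Z /\ IZR a / IZR c = IZR p / IZR q /\
      t0 = Rabs (IZR q / (IZR q * x - IZR p)) /\
      fx x t0 = 2 * Rabs (IZR q * (IZR q * x - IZR p)).
Proof.
  intros Ht0 Hq Hmin Hfx Hsq.
  assert (Hy : 0 < / t0) by (apply Rinv_0_lt_compat; lra).
  pose proof (gcd_one x (/t0) p q Hy Hq Hmin) as Hg.
  destruct (Zis_gcd_bezout _ _ _ (Zgcd_is_gcd p q)) as [u v Huv]. rewrite Hg in Huv.
  assert (Hw : Cplus (RtoC x) (Cmult Ci (RtoC (/t0))) = (x, /t0)).
  { unfold Cplus, Cmult, Ci, RtoC; simpl; f_equal; ring. }
  destruct (geo x (/t0) p (-v) q u Hy Hq ltac:(lia) Hmin) as [n Hn].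
  exists p, (-v)%Z, q, u, n. split; [unfold is_SL2Z; lia|]. split; [rewrite Hw; exact Hn|].
  split; [lia|].
  exists p, q. split; [lia|]. split; [exact Hg|]. split; [reflexivity|].
  assert (HQ : 0 < IZR q) by (apply IZR_lt; lia).
  set (U := IZR q * x - IZR p).
  assert (HU2 : U^2 * t0^2 = IZR q ^ 2) by (rewrite <- Hsq; unfold U; rewrite opp_IZR; ring).
  assert (Hs : t0 * Rabs U = IZR q).
  { assert (Hsq2 : (t0 * Rabs U)^2 = IZR q ^ 2).
    { rewrite <- HU2. rewrite Rpow_mult_distr, pow2_abs. ring. }
    assert (0 <= t0 * Rabs U) by (apply Rmult_le_pos; [lra|apply Rabs_pos]).
    nra. }
  assert (HU : Rabs U <> 0) by (intro E; rewrite E in Hs; lra).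
  split.
  - rewrite Rabs_div by (intro E; apply HU; rewrite E; apply Rabs_R0).
    rewrite (Rabs_right (IZR q)) by lra. rewrite <- Hs. field. auto.
  - rewrite Hfx. unfold Nf. rewrite opp_IZR.
    rewrite Rabs_mult, (Rabs_right (IZR q)) by lra.
    replace ((- IZR p + IZR q * x)^2) with (Rabs U ^ 2) by (rewrite pow2_abs; unfold U; ring).
    rewrite <- Hs. field. lra.
Qed.

Theorem proposition4 (x t0 : R) :
  irrational x -> 0 < t0 -> local_min_pos (fx x) t0 ->
  exists (a b c d n : Z),
    is_SL2Z a b c d /\
    in_gD0n a b c d n (Cplus (RtoC x) (Cmult Ci (RtoC (/ t0)))) /\
    c <> 0%Z /\
    exists p q : Z,
      (0 < q)%Z /\ Z.gcd p q = 1%Z /\ IZR a / IZR c = IZR p / IZR q /\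
      t0 = Rabs (IZR q / (IZR q * x - IZR p)) /\
      fx x t0 = 2 * Rabs (IZR q * (IZR q * x - IZR p)).
Proof.
  intros Hirr Ht0 [eps [He Hloc]].
  destruct (fx_char x t0 Ht0) as [a [b [Hnz [Hmin [Hfx _]]]]].
  assert (Hlin : IZR a + IZR b * x <> 0).
  { intro E. destruct (Z.eq_dec b 0) as [Hb|Hb].
    - subst b. apply Hnz. f_equal. apply eq_IZR_R0. rewrite <- E. simpl. ring.
    - apply Hirr. exists (- a)%Z, b. split; auto.
      assert (IZR b <> 0) by (apply not_0_IZR; auto).
      rewrite opp_IZR.
      replace x with ((IZR a + IZR b * x - IZR a) / IZR b) by (field; auto).
      rewrite E. field. auto. }
  set (A := (IZR a + IZR b * x)^2). set (B := IZR b ^ 2).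
  assert (HA : 0 < A) by (apply pow2_gt_0; auto).
  assert (HB : 0 <= B) by apply pow2_ge_0.
  assert (Hcrit : A * t0^2 = B).
  { apply (crit A B t0 eps HA HB Ht0 He).
    intros t Ht Hd.
    destruct (fx_char x t Ht) as [_ [_ [_ [_ [_ Hle]]]]].
    specialize (Hle a b Hnz). specialize (Hloc t Ht Hd).
    assert (E1 : t0 * A + B / t0 = fx x t0) by (rewrite Hfx; unfold Nf, A, B; field; lra).
    assert (E2 : t * A + B / t = t * Nf x (/ t) a b) by (unfold Nf, A, B; field; lra).
    lra. }
  assert (Hb0 : b <> 0%Z).
  { intro Hb. unfold B in Hcrit. rewrite Hb in Hcrit. simpl in Hcrit.
    assert (0 < A * t0^2) by (apply Rmult_lt_0_compat; [lra|apply pow2_gt_0; lra]). lra. }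
  destruct (Z_lt_ge_dec 0 b) as [Hbp|Hbn].
  - apply (final x t0 (- a) b Ht0 Hbp).
    + rewrite Z.opp_involutive. exact Hmin.
    + rewrite Z.opp_involutive. exact Hfx.
    + rewrite !opp_IZR. unfold A, B in Hcrit. rewrite <- Hcrit. ring.
  - assert (Hbn' : (0 < - b)%Z) by lia.
    assert (Heq : forall y, Nf x y (- a) (- b) = Nf x y a b).
    { intro y. unfold Nf. rewrite !opp_IZR. ring. }
    apply (final x t0 a (- b) Ht0 Hbn').
    + intros a' b' H'. rewrite Heq. auto.
    + rewrite Heq. exact Hfx.
    + rewrite !opp_IZR. unfold A, B in Hcrit. replace ((- IZR b)^2) with (IZR b ^ 2) by ring. rewrite <- Hcrit. ring.
Qed.
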